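(* Let $g=(g_1,\dots,g_\ell):\mathbb{R}^r\to\mathbb{R}^\ell$ and $m=(m_1,\dots,m_\ell):\mathcal{A}\to\mathbb{R}^\ell$ ($\mathcal A\subset\mathbb{R}^s$) be given, let $\{P_1(\cdot|\theta):\theta\in\Theta\}$, $\Theta\subset\mathbb{R}^d$, be a parametric family of probability measures on $\mathbb{R}^r$, and for $\alpha\in\mathcal A$ let $\mathcal{M}_\alpha=\{Q$ finite signed measure$:\int dQ=1,\ \int g\,dQ=m(\alpha)\}$ and $\mathcal M=\bigcup_{\alpha\in\mathcal A}\mathcal M_\alpha$. Let $P_T=P(\cdot|\phi^* )=\lambda^*P_1(\cdot|\theta^* )+(1-\lambda^* )P_0^*$ with $\phi^*=(\lambda^*,\theta^*,\alpha^* )$, $\lambda^*\in(0,1)$, so that $P_0^*=\frac{1}{1-\lambda^*}P_T-\frac{\lambda^*}{1-\lambda^*}P_1(\cdot|\theta^* )$. Let $$\mathcal N=\Big\{Q \text{ probability measure}:\ Q=\tfrac{1}{1-\lambda}P_T-\tfrac{\lambda}{1-\lambda}P_1(\cdot|\theta),\ \lambda\in(0,1),\ \theta\in\Theta\Big\}.$$ Assume that $P_0^*\in\mathcal M$ and that: (1) the system of equations $\int g_i(x)\big(dP(x|\phi^* )-\lambda\,dP_1(x|\theta)\big)=(1-\lambda)m_i(\alpha)$, $i=1,\dots,\ell$, has a unique solution $(\lambda^*,\theta^*,\alpha^* )$; (2) the function $\alpha\mapsto m(\alpha)$ is one-to-one; (3) for every $\theta\in\Theta$, $\lim_{\|x\|\to\infty}\frac{dP_1(x|\theta)}{dP_T(x)}=c$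 for some $c\in[0,\infty)\setminus\{1\}$; (4) the parametric component is identifiable: if $P_1(\cdot|\theta)=P_1(\cdot|\theta')$ $dP_T$-a.e., then $\theta=\theta'$. Then $\mathcal N\cap\mathcal M$ contains a unique measure, namely $P_0^*$, and there exists a unique vector $(\lambda^*,\theta^*,\alpha^* )$ such that $P_T=\lambda^*P_1(\cdot|\theta^* )+(1-\lambda^* )P_0^*$ with $P_0^*=\frac{1}{1-\lambda^*}P_T-\frac{\lambda^*}{1-\lambda^*}P_1(\cdot|\theta^* )\in\mathcal M_{\alpha^*}$.
   Context: $\frac{dP_1(\cdot|\theta)}{dP_T}$ denotes the Radon–Nikodym derivative. $P_T$ is the true distribution generating the data. *)

(* Defs.v *)
From HB Require Import structures.
From mathcomp Require Import all_boot all_order all_algebra.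
From mathcomp Require Import all_classical all_reals all_analysis.
Set Implicit Arguments. Unset Strict Implicit. Unset Printing Implicit Defensive.
Import Order.TTheory GRing.Theory Num.Theory.
Import numFieldNormedType.Exports.
Local Open Scope classical_set_scope.
Local Open Scope ring_scope.
Local Open Scope ereal_scope.

(* Euclidean norm on R^r, represented as r.-tuple R (which carries the
   product = Borel sigma-algebra of the library). *)
Definition tnorm (R : realType) (r : nat) (x : r.-tuple R) : R :=
  Num.sqrt (\sum_(i < r) (tnth x i) ^+ 2)%R.

Section defs.
Context d (T : measurableType d) (R : realType).

(* Q is in M_alpha: Q is a finite signed measure (difference of two finite
   measures on measurable sets), total mass 1, and  \int g_i dQ = m_i(alpha)
   where the integral of g_i w.r.t. Q = mu - nu is \int g_i dmu - \int g_i dnu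
   (g_i integrable w.r.t. mu and nu). *)
Definition in_Malpha (l s : nat) (g : 'I_l -> T -> R)
    (m : 'rV[R]_s -> 'I_l -> R) (alpha : 'rV[R]_s) (Q : set T -> \bar R) : Prop :=
  exists mu nu : {finite_measure set T -> \bar R},
    (forall A, measurable A -> Q A = mu A - nu A) /\
    (forall i, mu.-integrable setT (fun x => (g i x)%:E) /\
               nu.-integrable setT (fun x => (g i x)%:E)) /\
    Q setT = 1 /\
    (forall i, \int[mu]_x (g i x)%:E - \int[nu]_x (g i x)%:E = (m alpha i)%:E).

Definition in_M (l s : nat) (Aset : set 'rV[R]_s) (g : 'I_l -> T -> R)
    (m : 'rV[R]_s -> 'I_l -> R) (Q : set T -> \bar R) : Prop :=
  exists alpha, Aset alpha /\ in_Malpha g m alpha Q.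

Definition comp0 (PT P1 : set T -> \bar R) (lam : R) : set T -> \bar R :=
  fun A => ((1 - lam)^-1)%:E * PT A - (lam / (1 - lam))%:E * P1 A.

Definition in_N (dd : nat) (Theta : set 'rV[R]_dd) (PT : probability T R)
    (P1 : 'rV[R]_dd -> probability T R) (Q : probability T R) : Prop :=
  exists (lam : R) (theta : 'rV[R]_dd), (0 < lam < 1)%R /\ Theta theta /\
    forall A, measurable A -> Q A = comp0 PT (P1 theta) lam A.

Definition is_RN_density (mu nu : set T -> \bar R) (f : T -> R) : Prop :=
  measurable_fun setT f /\ (forall x, (0 <= f x)%R) /\
  forall A, measurable A -> nu A = \int[mu]_(x in A) (f x)%:E.

Definition moment_eq (l s : nat) (g : 'I_l -> T -> R)
    (m : 'rV[R]_s -> 'I_l -> R) (PT P1 : probability T R) (lam : R)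
    (alpha : 'rV[R]_s) (i : 'I_l) : Prop :=
  \int[PT]_x (g i x)%:E - lam%:E * \int[P1]_x (g i x)%:E
    = ((1 - lam) * m alpha i)%:E.

End defs.

(* Main.v *)
Require Import Defs.
From HB Require Import structures.
From mathcomp Require Import all_boot all_order all_algebra.
From mathcomp Require Import all_classical all_reals all_analysis.
From mathcomp Require Import ring lra measurable_realfun.
Import Order.TTheory GRing.Theory Num.Theory.
Import numFieldNormedType.Exports.
Local Open Scope classical_set_scope.
Local Open Scope ring_scope.
Local Open Scope ereal_scope.

Section helpers.
Context d (T : measurableType d) (R : realType).
Variables (PT P1 : probability T R) (mu nu : {finite_measure set T -> \bar R}).
Variable lam : R.
Hypothesis hlam : (0 < lam < 1)%R.
Hypothesis hc : forall A, measurable A -> comp0 PT P1 lam A = mu A - nu A.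

Let c_ge0 : (0 <= lam / (1 - lam))%R.
Proof. case/andP: hlam => h0 h1; apply: divr_ge0; lra. Qed.
Let c'_ge0 : (0 <= (1 - lam)^-1)%R.
Proof. case/andP: hlam => h0 h1; rewrite invr_ge0; lra. Qed.

Let mL := measure_add mu (mscale (NngNum c_ge0) P1).
Let mR := measure_add nu (mscale (NngNum c'_ge0) PT).

Lemma mLR A : measurable A -> mL A = mR A.
Proof.
move=> mA.
have -> : mL A = mu A + (lam / (1 - lam))%R%:E * P1 A by rewrite /mL measure_addE.
have -> : mR A = nu A + ((1 - lam)^-1)%R%:E * PT A by rewrite /mR measure_addE.
have := hc A mA; rewrite /comp0.
rewrite -[PT A]fineK ?fin_num_measure// -[P1 A]fineK ?fin_num_measure//.
rewrite -[mu A]fineK ?fin_num_measure// -[nu A]fineK ?fin_num_measure//.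
rewrite -!EFinM -!EFinB -!EFinD.
move=> Heq; have {}Heq := EFin_inj Heq; congr (_%:E).
move: Heq; set u := (lam / (1 - lam))%R; set v := (1 - lam)^-1%R; lra.
Qed.

Let lam1 : (1 - lam != 0)%R.
Proof. case/andP: hlam => h0 h1; apply/eqP; lra. Qed.

Lemma ge0_eq (f : T -> \bar R) : (forall x, 0 <= f x) -> measurable_fun setT f ->
  \int[mu]_x f x \is a fin_num -> \int[nu]_x f x \is a fin_num ->
  \int[PT]_x f x \is a fin_num ->
  \int[P1]_x f x \is a fin_num /\
  ((1 - lam) * fine (\int[mu]_x f x) + lam * fine (\int[P1]_x f x) =
   (1 - lam) * fine (\int[nu]_x f x) + fine (\int[PT]_x f x))%R.
Proof.
move=> f0 mf fmu fnu fPT.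
have E : \int[mu]_x f x + (lam / (1 - lam))%R%:E * \int[P1]_x f x =
         \int[nu]_x f x + ((1 - lam)^-1)%R%:E * \int[PT]_x f x.
  transitivity (\int[mL]_x f x).
    by rewrite ge0_integral_measure_add// ge0_integral_mscale.
  rewrite (eq_measure_integral mR); last by move=> A mA _; exact: mLR.
  by rewrite ge0_integral_measure_add// ge0_integral_mscale.
have hv : ((1 - lam) * (1 - lam)^-1 = 1)%R by rewrite mulfV.
have hu : ((1 - lam) * (lam / (1 - lam)) = lam)%R by rewrite mulrCA hv mulr1.
have hc0 : (0 < lam / (1 - lam))%R.
  case/andP: hlam => h0 h1; apply: divr_gt0; lra.
have p0 : 0 <= \int[P1]_x f x by apply: integral_ge0.
move: E p0.
rewrite -(fineK fmu) -(fineK fnu) -(fineK fPT).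
case: (\int[P1]_x f x) => [p| |] E p0 //=.
  split => //; move: E; rewrite -!EFinM -!EFinD => Heq; have {}Heq := EFin_inj Heq.
  set u := (lam / (1 - lam))%R in Heq hu; set v := ((1 - lam)^-1)%R in Heq hv.
  move: (congr1 (fun z => (1 - lam) * z)%R Heq); rewrite /= !mulrDr !mulrA [((1 - lam) * lam / (1 - lam))%R]mulrAC mulfV // !mul1r. done.
by move: E; rewrite gt0_muley ?lte_fin// addey// -EFinM -EFinD.
Qed.

Lemma sgn_eq (h : T -> R) :
  mu.-integrable setT (fun x => (h x)%:E) ->
  nu.-integrable setT (fun x => (h x)%:E) ->
  PT.-integrable setT (fun x => (h x)%:E) ->
  P1.-integrable setT (fun x => (h x)%:E) /\
  \int[PT]_x (h x)%:E - lam%:E * \int[P1]_x (h x)%:E =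
    (1 - lam)%:E * (\int[mu]_x (h x)%:E - \int[nu]_x (h x)%:E).
Proof.
move=> imu inu iPT.
set F := fun x => (h x)%:E.
have mF : measurable_fun setT F := measurable_int _ imu.
have [fp ep] := ge0_eq (F^\+) (fun x => funepos_ge0 _ x) (measurable_funepos mF)
  (integrable_pos_fin_num measurableT imu) (integrable_pos_fin_num measurableT inu)
  (integrable_pos_fin_num measurableT iPT).
have [fn en] := ge0_eq (F^\-) (fun x => funeneg_ge0 _ x) (measurable_funeneg mF)
  (integrable_neg_fin_num measurableT imu) (integrable_neg_fin_num measurableT inu)
  (integrable_neg_fin_num measurableT iPT).
have iP1 : P1.-integrable setT F.
  apply/integrableP; split => //.
  rewrite (_ : (fun x => `|F x|) = (fun x => F^\+ x + F^\- x)); last first.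
    by apply/funext => x; rewrite -[LHS]/((abse \o F) x) (fune_abse F).
  rewrite ge0_integralD//; last 2 first.
  - exact: measurable_funepos.
  - exact: measurable_funeneg.
  by rewrite -(fineK fp) -(fineK fn) -EFinD ltry.
split => //.
have eI (m : {measure set T -> \bar R}) :
  \int[m]_x F x = \int[m]_x F^\+ x - \int[m]_x F^\- x := integralE _ _ _.
rewrite !eI -(fineK fp) -(fineK fn).
rewrite -(fineK (integrable_pos_fin_num measurableT imu)).
rewrite -(fineK (integrable_neg_fin_num measurableT imu)).
rewrite -(fineK (integrable_pos_fin_num measurableT inu)).
rewrite -(fineK (integrable_neg_fin_num measurableT inu)).
rewrite -(fineK (integrable_pos_fin_num measurableT iPT)).
rewrite -(fineK (integrable_neg_fin_num measurableT iPT)).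
rewrite -!EFinB -!EFinM; congr (_%:E).
move: ep en.
set mp := fine _; set mn := fine _; set np := fine _; set nn := fine _.
set tp := fine _; set tn := fine _; set pp := fine _; set pn := fine _.
move=> e1 e2.
have -> : nn = ((1 - lam) * mp + lam * mn - (1 - lam) * np)%R by rewrite e1; ring.
have -> : pn = ((1 - lam) * tp + lam * tn - (1 - lam) * pp)%R by rewrite e2; ring.
ring.
Qed.
End helpers.

Section more.
Context d (T : measurableType d) (R : realType).

Lemma fin_of_sub {a b y : \bar R} {r : R} : a - b - y = r%:E -> 0 <= a -> 0 <= b ->
  a \is a fin_num /\ b \is a fin_num.
Proof. by case: a => [a| |]; case: b => [b| |]; case: y => [y| |]. Qed.

Lemma int_of_moment (PT P1 : probability T R) (lam : R) (h : T -> R) (r : R) :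
  measurable_fun setT (fun x => (h x)%:E) ->
  \int[PT]_x (h x)%:E - lam%:E * \int[P1]_x (h x)%:E = r%:E ->
  PT.-integrable setT (fun x => (h x)%:E).
Proof.
set F := fun x => (h x)%:E => mF E.
have [fp fn] : \int[PT]_x F^\+ x \is a fin_num /\ \int[PT]_x F^\- x \is a fin_num.
  move: E; rewrite [\int[PT]_x F x]integralE => E.
  apply: (fin_of_sub E); apply: integral_ge0 => x _.
  - exact: funepos_ge0.
  - exact: funeneg_ge0.
apply/integrableP; split => //.
rewrite (_ : (fun x => `|F x|) = (fun x => F^\+ x + F^\- x)); last first.
  by apply/funext => x; rewrite -[LHS]/((abse \o F) x) (fune_abse F).
rewrite ge0_integralD//; last 2 first.
- exact: measurable_funepos.
- exact: measurable_funeneg.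
by rewrite -(fineK fp) -(fineK fn) -EFinD ltry.
Qed.
End more.


Lemma transfer_Malpha d0 (T0 : measurableType d0) (R : realType) (l s : nat)
  (g : 'I_l -> T0 -> R) (m : 'rV[R]_s -> 'I_l -> R) alpha (Q Q' : set T0 -> \bar R) :
  in_Malpha g m alpha Q -> (forall A, measurable A -> Q' A = Q A) ->
  in_Malpha g m alpha Q'.
Proof.
move=> [mu [nu [hQ [hi [h1 hm]]]]] e; exists mu, nu.
split; first by move=> A mA; rewrite e // hQ.
split => //; split => //; by rewrite e.
Qed.

Theorem proposition2 (R : realType) (r dd s l : nat)
  (Theta : set 'rV[R]_dd) (Aset : set 'rV[R]_s)
  (g : 'I_l -> r.-tuple R -> R) (m : 'rV[R]_s -> 'I_l -> R)
  (P1 : 'rV[R]_dd -> probability (r.-tuple R) R)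
  (PT P0 : probability (r.-tuple R) R)
  (lam : R) (theta : 'rV[R]_dd) (alpha : 'rV[R]_s)
  (hlam : (0 < lam < 1)%R) (htheta : Theta theta) (halpha : Aset alpha)
  (hPT : forall A, measurable A ->
     PT A = lam%:E * P1 theta A + (1 - lam)%:E * P0 A)
  (hP0M : in_M Aset g m P0)
  (H1 : (forall i, moment_eq g m PT (P1 theta) lam alpha i) /\
        (forall (lam' : R) theta' alpha', (0 < lam' < 1)%R -> Theta theta' ->
           Aset alpha' -> (forall i, moment_eq g m PT (P1 theta') lam' alpha' i) ->
           lam' = lam /\ theta' = theta /\ alpha' = alpha))
  (H2 : forall a a', Aset a -> Aset a' -> (forall i, m a i = m a' i) -> a = a')
  (H3 : forall th, Theta th -> exists c : R, (0 <= c)%R /\ c != 1%R /\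
        exists f, is_RN_density PT (P1 th) f /\
          forall e : R, (0 < e)%R -> exists M : R, forall x,
            (M < tnorm x)%R -> (`|f x - c| < e)%R)
  (H4 : forall th th', Theta th -> Theta th' -> forall f f',
        is_RN_density PT (P1 th) f -> is_RN_density PT (P1 th') f' ->
        {ae PT, forall x, f x = f' x} -> th = th') :
  (in_N Theta PT P1 P0 /\ in_M Aset g m P0 /\
   forall Q : probability (r.-tuple R) R,
     in_N Theta PT P1 Q -> in_M Aset g m Q ->
     forall A, measurable A -> Q A = P0 A) /\
  (in_Malpha g m alpha (comp0 PT (P1 theta) lam) /\
   forall (lam' : R) theta' alpha', (0 < lam' < 1)%R -> Theta theta' -> Aset alpha' ->
     in_Malpha g m alpha' (comp0 PT (P1 theta') lam') ->
     lam' = lam /\ theta' = theta /\ alpha' = alpha).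

Proof.
have [hmom huniq] := H1.
have hcomp : forall A, measurable A -> comp0 PT (P1 theta) lam A = P0 A.
  move=> A mA; rewrite /comp0 hPT //.
  have l1 : (1 - lam != 0)%R by case/andP: hlam => h0 h1; apply/eqP; lra.
  rewrite -[P0 A]fineK ?fin_num_measure// -[P1 theta A]fineK ?fin_num_measure//.
  rewrite -!EFinM -EFinB; congr (_%:E).
  by field.
have key : forall (lam' : R) theta' alpha', (0 < lam' < 1)%R ->
    in_Malpha g m alpha' (comp0 PT (P1 theta') lam') ->
    forall i, moment_eq g m PT (P1 theta') lam' alpha' i.
  move=> lam' theta' alpha' hl' [mu [nu [hQ [hint [_ hm]]]]] i.
  have iPT := @int_of_moment _ _ _ PT (P1 theta) lam (g i) _ (measurable_int _ (hint i).1) (hmom i).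
  have [_ E] := @sgn_eq _ _ _ PT (P1 theta') mu nu lam' hl' hQ (g i) (hint i).1 (hint i).2 iPT.
  by rewrite /moment_eq E hm -EFinM.
have p2b : forall (lam' : R) theta' alpha', (0 < lam' < 1)%R -> Theta theta' -> Aset alpha' ->
     in_Malpha g m alpha' (comp0 PT (P1 theta') lam') ->
     lam' = lam /\ theta' = theta /\ alpha' = alpha.
  move=> lam' theta' alpha' hl' ht ha hM.
  exact: huniq hl' ht ha (key _ _ _ hl' hM).
have p2a : in_Malpha g m alpha (comp0 PT (P1 theta) lam).
  case: hP0M => a0 [ha0 hM0].
  have hM : in_Malpha g m a0 (comp0 PT (P1 theta) lam) by apply: transfer_Malpha hM0 hcomp.
  have [_ [_ ea]] := p2b _ _ _ hlam htheta ha0 hM.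
  by rewrite -ea.
split; last by split.
split; first by exists lam, theta; split => //; split => // A mA; rewrite hcomp.
split => // Q [lam' [theta' [hl' [ht hQ]]]] [a' [ha' hMQ]] A mA.
have hM : in_Malpha g m a' (comp0 PT (P1 theta') lam').
  by apply: transfer_Malpha hMQ _ => B mB; rewrite hQ.
have [el [et _]] := p2b _ _ _ hl' ht ha' hM.
by rewrite hQ // el et hcomp.
Qed.
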